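(* Let $n\ge2$, $C>0$, $\lambda>0$, and $$0<R<\min\Big\{\frac{x_1}{\lambda},\ \sqrt{\tfrac38(3n-5)(2n-3)^3}\Big\}.$$ Then $u:=u^*-v$ satisfies $$u_t\le\Delta u+uu_r^3\qquad\text{in }(B_R\setminus\{0\})\times(0,\infty).$$
   Context: $B_R=\{x\in\mathbb R^n:|x|<R\}$; radial functions are written in $r=|x|$, subscript $r$ is the radial derivative. $\alpha:=\sqrt[3]{9n-15}$, $u^*(r):=-\alpha r^{1/3}$, $\nu:=\tfrac16\sqrt{36n^2-96n+61}$, $J_\nu$ is the Bessel function of the first kind of order $\nu$, and $v(r,t):=Ce^{-\lambda^2t}r^{n-\frac32}J_\nu(\lambda r)$. $x_0>0$ and $x_1\in(0,x_0)$ denote the first positive roots of $J_\nu$ and of $J_\nu'$, respectively. *)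

(* Defs.v *)
From Stdlib Require Import Arith Factorial Reals Lra ClassicalEpsilon.
Open Scope R_scope.

(* The limit of a real sequence (chosen classically; meaningful when it converges). *)
Definition lim_seq (u : nat -> R) : R :=
  epsilon (inhabits 0) (fun l => Un_cv u l).

Definition Gamma (z : R) : R :=
  lim_seq (fun k => INR (fact k) * Rpower (INR k) z
                    / prod_f_R0 (fun j => z + INR j) k).

Definition BesselJ (nu x : R) : R :=
  lim_seq (fun N => sum_f_R0 (fun m =>
     (-1) ^ m / (INR (fact m) * Gamma (INR m + nu + 1))
       * Rpower (x / 2) (2 * INR m + nu)) N).

Definition alpha (n : nat) : R := Rpower (9 * INR n - 15) (1/3).
Definition nu (n : nat) : R := / 6 * sqrt (36 * (INR n)^2 - 96 * INR n + 61).

Definition ustar (n : nat) (r : R) : R := - alpha n * Rpower r (1/3).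

Definition vfun (n : nat) (C lam : R) (r t : R) : R :=
  C * exp (- lam ^ 2 * t) * Rpower r (INR n - 3/2) * BesselJ (nu n) (lam * r).

Definition ufun (n : nat) (C lam : R) (r t : R) : R :=
  ustar n r - vfun n C lam r t.

(* Main.v *)
Require Import Defs.
From Stdlib Require Import Arith Factorial Reals Lra Lia ClassicalEpsilon.
From Coquelicot Require Import Coquelicot.
Open Scope R_scope.

Definition G (z : R) : nat -> R := fun k => INR (fact k) * Rpower (INR k) z
                    / prod_f_R0 (fun j => z + INR j) k.

Lemma Gamma_G z : Gamma z = lim_seq (G z).
Proof. reflexivity. Qed.

Lemma prod_S (f : nat -> R) k : prod_f_R0 f (S k) = prod_f_R0 f k * f (S k).
Proof. reflexivity. Qed.

Lemma prod_pos z k : 0 < z -> 0 < prod_f_R0 (fun j => z + INR j) k.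
Proof.
  intros Hz; induction k as [|k IH].
  - simpl; lra.
  - rewrite prod_S. apply Rmult_lt_0_compat; auto. pose proof (pos_INR (S k)). lra.
Qed.

Lemma INR_fact_pos k : 0 < INR (fact k).
Proof. apply lt_0_INR, lt_O_fact. Qed.

Lemma G_pos z k : 0 < z -> (1 <= k)%nat -> 0 < G z k.
Proof.
  intros Hz Hk. unfold G. apply Rdiv_lt_0_compat; [|apply prod_pos; auto].
  apply Rmult_lt_0_compat; [apply INR_fact_pos|]. unfold Rpower; apply exp_pos.
Qed.

Lemma ln_le_sub1 x : 0 < x -> ln x <= x - 1.
Proof.
  intros Hx. pose proof (exp_ineq1_le (x - 1)).
  rewrite <- (ln_exp (x - 1)).
  replace (1 + (x - 1)) with x in H by ring.
  destruct (Rle_lt_or_eq_dec _ _ H) as [H1|H1].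
  - left; apply ln_increasing; auto.
  - right; f_equal; exact H1.
Qed.

Lemma exp_le_exp x y : x <= y -> exp x <= exp y.
Proof. intros [H|H]. left; apply exp_increasing; auto. right; subst; auto. Qed.

Lemma INR_pos_of k : (1 <= k)%nat -> 0 < INR k.
Proof. intros; apply lt_0_INR; lia. Qed.

Lemma G_S z k : (1 <= k)%nat -> 0 < z ->
  G z (S k) = G z k * ((INR k + 1)/(z + INR k + 1) * exp (z * (ln (INR k + 1) - ln (INR k)))).
Proof.
  intros Hk Hz. pose proof (INR_pos_of k Hk) as Hk'.
  pose proof (prod_pos z k Hz). pose proof (INR_fact_pos k).
  unfold G, Rpower. rewrite prod_S, fact_simpl, mult_INR, S_INR.
  replace (z * ln (INR k + 1)) with (z * ln (INR k) + z * (ln (INR k + 1) - ln (INR k))) by ring.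
  rewrite exp_plus. field. repeat split; lra.
Qed.

Lemma d_bounds k : (1 <= k)%nat ->
  / (INR k + 1) <= ln (INR k + 1) - ln (INR k) <= / INR k.
Proof.
  intros Hk. pose proof (INR_pos_of k Hk) as Hk'. split.
  - pose proof (ln_le_sub1 (INR k / (INR k + 1)) ltac:(apply Rdiv_lt_0_compat; lra)).
    unfold Rdiv in H. rewrite ln_mult, ln_Rinv in H by (try apply Rinv_0_lt_compat; lra).
    replace (INR k * / (INR k + 1) - 1) with (- / (INR k + 1)) in H by (field; lra). lra.
  - pose proof (ln_le_sub1 ((INR k + 1) / INR k) ltac:(apply Rdiv_lt_0_compat; lra)).
    unfold Rdiv in H. rewrite ln_mult, ln_Rinv in H by (try apply Rinv_0_lt_compat; lra).
    replace ((INR k + 1) * / INR k - 1) with (/ INR k) in H by (field; lra). lra.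
Qed.

Lemma ratio_ge1 z k : (1 <= k)%nat -> 0 < z ->
  1 <= (INR k + 1)/(z + INR k + 1) * exp (z * (ln (INR k + 1) - ln (INR k))).
Proof.
  intros Hk Hz. pose proof (INR_pos_of k Hk). destruct (d_bounds k Hk).
  pose proof (exp_ineq1_le (z * (ln (INR k + 1) - ln (INR k)))).
  assert (z * / (INR k + 1) <= z * (ln (INR k + 1) - ln (INR k))) by (apply Rmult_le_compat_l; lra).
  apply Rle_trans with ((INR k + 1)/(z + INR k + 1) * (1 + z * / (INR k + 1))).
  - right. field. lra.
  - apply Rmult_le_compat_l. apply Rlt_le, Rdiv_lt_0_compat; lra. lra.
Qed.

Lemma ratio_le z k : (1 <= k)%nat -> 0 < z ->
  (INR k + 1)/(z + INR k + 1) * exp (z * (ln (INR k + 1) - ln (INR k)))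
  <= exp (z * (1 + z) * (/ INR k - / (INR k + 1))).
Proof.
  intros Hk Hz. pose proof (INR_pos_of k Hk). destruct (d_bounds k Hk).
  pose proof (exp_ineq1_le ((INR k + 1)/(z + INR k + 1) - 1)).
  assert (0 < (INR k + 1)/(z + INR k + 1)) by (apply Rdiv_lt_0_compat; lra).
  apply Rle_trans with (exp ((INR k + 1)/(z + INR k + 1) - 1) * exp (z / INR k)).
  - apply Rmult_le_compat; try lra. left; apply exp_pos.
    apply exp_le_exp. unfold Rdiv. apply Rmult_le_compat_l; lra.
  - rewrite <- exp_plus. apply exp_le_exp.
    replace ((INR k + 1) / (z + INR k + 1) - 1 + z / INR k) with
      (z * (1 + z) * / (INR k * (z + INR k + 1))) by (field; lra).
    replace (/ INR k - / (INR k + 1)) with (/ (INR k * (INR k + 1))) by (field; lra).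
    apply Rmult_le_compat_l. nra.
    apply Rinv_le_contravar. nra. nra.
Qed.

Lemma G_bound z m : 0 < z ->
  G z (S m) <= G z 1 * exp (z * (1 + z) * (1 - / (INR m + 1))).
Proof.
  intros Hz. induction m as [|m IH].
  - simpl INR. replace (1 - / (0 + 1)) with 0 by field. rewrite Rmult_0_r, exp_0. lra.
  - rewrite G_S by (lia || lra).
    pose proof (ratio_le z (S m) ltac:(lia) Hz).
    pose proof (ratio_ge1 z (S m) ltac:(lia) Hz).
    pose proof (G_pos z (S m) Hz ltac:(lia)).
    apply Rle_trans with (G z 1 * exp (z * (1 + z) * (1 - / (INR m + 1))) *
       exp (z * (1 + z) * (/ INR (S m) - / (INR (S m) + 1)))).
    + apply Rmult_le_compat; lra.
    + rewrite Rmult_assoc, <- exp_plus. rewrite !S_INR.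
      right. f_equal. f_equal. field. pose proof (pos_INR m). lra.
Qed.

Lemma Gamma_spec z : 0 < z -> Un_cv (G z) (Gamma z) /\ G z 1 <= Gamma z.
Proof.
  intros Hz.
  set (H := fun m => G z (S m)).
  assert (Hg : Un_growing H).
  { intro m. unfold H. rewrite (G_S z (S m)) by (lia || lra).
    pose proof (ratio_ge1 z (S m) ltac:(lia) Hz). pose proof (G_pos z (S m) Hz ltac:(lia)).
    nra. }
  assert (Hb : has_ub H).
  { exists (G z 1 * exp (z * (1 + z))). intros x [i ->]. unfold H.
    eapply Rle_trans. apply G_bound; auto.
    apply Rmult_le_compat_l. left; apply G_pos; auto.
    apply exp_le_exp. assert (0 < / (INR i + 1)). apply Rinv_0_lt_compat. pose proof (pos_INR i); lra.
    assert (0 < z * (1+z)) by nra. nra. }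
  destruct (growing_cv H Hg Hb) as [l Hl].
  assert (HG : Un_cv (G z) l).
  { apply is_lim_seq_Reals. apply is_lim_seq_incr_1. apply is_lim_seq_Reals. exact Hl. }
  assert (Hex : exists l, Un_cv (G z) l) by eauto.
  pose proof (epsilon_spec (inhabits 0) (fun l => Un_cv (G z) l) Hex) as HE.
  rewrite Gamma_G. unfold lim_seq. split; [exact HE|].
  rewrite (UL_sequence _ _ _ HE HG). apply (growing_ineq H l Hg Hl 0).
Qed.

Lemma Gamma_pos z : 0 < z -> 0 < Gamma z.
Proof.
  intros Hz. destruct (Gamma_spec z Hz). pose proof (G_pos z 1 Hz (le_n 1)). lra.
Qed.

Lemma prod_shift z k : prod_f_R0 (fun j => z + INR j) k * (z + 1 + INR k)
   = z * prod_f_R0 (fun j => z + 1 + INR j) k.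
Proof.
  induction k as [|k IH].
  - simpl. ring.
  - rewrite !prod_S, S_INR.
    replace (prod_f_R0 (fun j : nat => z + INR j) k * (z + (INR k + 1)) * (z + 1 + (INR k + 1)))
      with (prod_f_R0 (fun j : nat => z + INR j) k * (z + 1 + INR k) * (z + 1 + (INR k + 1))) by ring.
    rewrite IH. ring.
Qed.

Lemma G_succ_z z k : 0 < z -> (1 <= k)%nat ->
  G (z + 1) k = G z k * (z * (INR k / (z + 1 + INR k))).
Proof.
  intros Hz Hk. pose proof (INR_pos_of k Hk). pose proof (prod_pos z k Hz).
  pose proof (prod_pos (z+1) k ltac:(lra)).
  unfold G. rewrite Rpower_plus, Rpower_1 by lra.
  assert (E := prod_shift z k).
  replace (prod_f_R0 (fun j : nat => z + 1 + INR j) k) with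
    (prod_f_R0 (fun j : nat => z + INR j) k * (z + 1 + INR k) / z) by (rewrite E; field; lra).
  field. repeat split; lra.
Qed.

Lemma Gamma_succ z : 0 < z -> Gamma (z + 1) = z * Gamma z.
Proof.
  intros Hz. destruct (Gamma_spec z Hz) as [H1 _].
  destruct (Gamma_spec (z+1) ltac:(lra)) as [H2 _].
  apply is_lim_seq_Reals in H1. apply is_lim_seq_Reals in H2.
  assert (H3 : is_lim_seq (fun k => INR k / (z + 1 + INR k)) 1).
  { apply is_lim_seq_ext_loc with (fun k => 1 - (z + 1) * / (z + 1 + INR k)).
    - exists 1%nat. intros k Hk. pose proof (INR_pos_of k Hk). field. lra.
    - replace (Finite 1) with (Finite (1 - (z+1) * 0)) by (f_equal; ring).
      apply is_lim_seq_minus'. apply is_lim_seq_const.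
      apply is_lim_seq_mult'. apply is_lim_seq_const.
      replace (Finite 0) with (Rbar_inv p_infty) by reflexivity.
      apply is_lim_seq_inv; [|discriminate].
      eapply is_lim_seq_plus. apply is_lim_seq_const. apply is_lim_seq_INR. reflexivity. }
  assert (H4 : is_lim_seq (fun k => G z k * (z * (INR k / (z + 1 + INR k)))) (Gamma z * (z * 1))).
  { apply is_lim_seq_mult'. exact H1. apply is_lim_seq_mult'. apply is_lim_seq_const. exact H3. }
  assert (H5 : is_lim_seq (G (z+1)) (Gamma z * (z * 1))).
  { eapply is_lim_seq_ext_loc; [|exact H4]. exists 1%nat. intros k Hk. symmetry; apply G_succ_z; auto. }
  pose proof (is_lim_seq_unique _ _ H2). pose proof (is_lim_seq_unique _ _ H5).
  rewrite H in H0. injection H0. intros ->. ring.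
Qed.

Section Bes.
Variable nu0 : R.
Hypothesis Hnu : 0 < nu0.

Definition acoef (m : nat) : R := (-1) ^ m / (INR (fact m) * Gamma (INR m + nu0 + 1)).

Lemma Gpos m : 0 < Gamma (INR m + nu0 + 1).
Proof. apply Gamma_pos. pose proof (pos_INR m). lra. Qed.

Lemma acoef_rec m : acoef (S m) = - acoef m / ((INR m + 1) * (INR m + 1 + nu0)).
Proof.
  unfold acoef. rewrite fact_simpl, mult_INR, S_INR.
  replace (INR m + 1 + nu0 + 1) with ((INR m + nu0 + 1) + 1) by ring.
  rewrite Gamma_succ by (pose proof (pos_INR m); lra).
  pose proof (Gpos m). pose proof (INR_fact_pos m). pose proof (pos_INR m).
  simpl pow. field. repeat split; lra.
Qed.

Lemma acoef_nz m : acoef m <> 0.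
Proof.
  unfold acoef. pose proof (Gpos m). pose proof (INR_fact_pos m).
  apply Rmult_integral_contrapositive. split. apply pow_nonzero. lra.
  apply Rinv_neq_0_compat. apply Rgt_not_eq. apply Rmult_gt_0_compat; lra.
Qed.

Lemma acoef0 : acoef 0 = / Gamma (nu0 + 1).
Proof. unfold acoef. simpl INR. simpl fact. simpl pow. replace (0 + nu0 + 1) with (nu0 + 1) by ring.
  simpl INR. field. pose proof (Gamma_pos (nu0 + 1) ltac:(lra)). lra. Qed.

Lemma acoef0_pos : 0 < acoef 0.
Proof. rewrite acoef0. apply Rinv_0_lt_compat, Gamma_pos. lra. Qed.

Lemma CV_a : CV_radius acoef = p_infty.
Proof.
  apply CV_radius_infinite_DAlembert. apply acoef_nz.
  apply is_lim_seq_le_le with (fun _ => 0) (fun m => / INR (S m)).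
  - intro m. rewrite acoef_rec. pose proof (pos_INR m). pose proof (acoef_nz m).
    replace (- acoef m / ((INR m + 1) * (INR m + 1 + nu0)) / acoef m)
      with (- / ((INR m + 1) * (INR m + 1 + nu0))) by (field; repeat split; lra).
    rewrite Rabs_Ropp, Rabs_pos_eq. split. left; apply Rinv_0_lt_compat; nra.
    rewrite S_INR. apply Rinv_le_contravar. lra. nra.
    left; apply Rinv_0_lt_compat; nra.
  - apply is_lim_seq_const.
  - replace (Finite 0) with (Rbar_inv p_infty) by reflexivity.
    apply is_lim_seq_inv; [|discriminate].
    apply (is_lim_seq_incr_1 INR). apply is_lim_seq_INR.
Qed.

Definition a1 := PS_derive acoef.
Definition a2 := PS_derive a1.
Definition f0 := PSeries acoef.
Definition f1 := PSeries a1.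
Definition f2 := PSeries a2.

Lemma CV_a1 : CV_radius a1 = p_infty.
Proof. unfold a1. rewrite CV_radius_derive. apply CV_a. Qed.
Lemma CV_a2 : CV_radius a2 = p_infty.
Proof. unfold a2. rewrite CV_radius_derive. apply CV_a1. Qed.

Lemma f0_deriv y : derivable_pt_lim f0 y (f1 y).
Proof. apply is_derive_Reals. apply is_derive_PSeries. rewrite CV_a. exact I. Qed.
Lemma f1_deriv y : derivable_pt_lim f1 y (f2 y).
Proof. apply is_derive_Reals. apply is_derive_PSeries. rewrite CV_a1. exact I. Qed.

Lemma ps_correct b y : CV_radius b = p_infty -> is_pseries b y (PSeries b y).
Proof. intros H. apply PSeries_correct, CV_radius_inside. rewrite H. exact I. Qed.

Lemma f_ode y : y * f2 y + (nu0 + 1) * f1 y + f0 y = 0.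
Proof.
  pose proof (is_pseries_incr_1 _ _ _ (ps_correct a2 y CV_a2)) as H2.
  pose proof (is_pseries_scal (nu0 + 1) _ _ _ (Rmult_comm _ _) (ps_correct a1 y CV_a1)) as H1.
  pose proof (is_pseries_plus _ _ _ _ _ (is_pseries_plus _ _ _ _ _ H2 H1) (ps_correct acoef y CV_a)) as H.
  apply is_pseries_unique in H.
  rewrite PSeries_ext with (b := fun _ => 0) in H.
  - rewrite PSeries_const_0 in H. unfold f0, f1, f2. rewrite H. reflexivity.
  - intro k. unfold PS_plus, PS_scal, PS_incr_1, plus, scal. simpl.
    unfold mult; simpl.
    destruct k as [|j].
    + unfold a1, PS_derive. rewrite acoef_rec. simpl INR. unfold zero; simpl.
      pose proof (acoef_nz 0). field. lra.
    + unfold a2, a1, PS_derive. rewrite (acoef_rec (S j)). rewrite !S_INR.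
      pose proof (pos_INR j). field. lra.
Qed.

Lemma lim_seq_eq u l : Un_cv u l -> lim_seq u = l.
Proof.
  intros H. unfold lim_seq.
  assert (Hex : exists l, Un_cv u l) by eauto.
  pose proof (epsilon_spec (inhabits 0) (fun l => Un_cv u l) Hex) as HE.
  exact (UL_sequence _ _ _ HE H).
Qed.

Lemma term_eq x m : 0 < x ->
  Rpower (x/2) (2 * INR m + nu0) = Rpower (x/2) nu0 * (x*x/4)^m.
Proof.
  intros Hx. rewrite Rpower_plus.
  replace (2 * INR m) with (INR (2 * m)) by (rewrite mult_INR; reflexivity).
  rewrite Rpower_pow by lra. rewrite pow_mult.
  replace ((x/2)^2) with (x*x/4) by field. ring.
Qed.

Lemma BesselJ_eq x : 0 < x -> BesselJ nu0 x = Rpower (x/2) nu0 * f0 (x*x/4).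
Proof.
  intros Hx. unfold BesselJ. apply lim_seq_eq.
  pose proof (ps_correct acoef (x*x/4) CV_a) as H.
  unfold is_pseries, is_series in H.
  assert (H' : is_lim_seq (sum_n (fun k => scal (pow_n (x*x/4) k) (acoef k))) (f0 (x*x/4))) by exact H.
  apply (is_lim_seq_scal_l _ (Rpower (x/2) nu0)) in H'.
  apply is_lim_seq_Reals.
  eapply is_lim_seq_ext; [|exact H'].
  intro N. simpl. rewrite sum_n_Reals, scal_sum. apply sum_eq. intros m _.
  rewrite term_eq by lra. unfold scal; simpl. unfold mult; simpl. rewrite pow_n_pow.
  fold (acoef m). ring.
Qed.

End Bes.

Lemma D_eq f x l l' : derivable_pt_lim f x l -> l = l' -> derivable_pt_lim f x l'.
Proof. intros H ->; exact H. Qed.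
Lemma D_mult f g x df dg : derivable_pt_lim f x df -> derivable_pt_lim g x dg ->
  derivable_pt_lim (fun s => f s * g s) x (df * g x + f x * dg).
Proof. intros; apply (derivable_pt_lim_mult f g); auto. Qed.
Lemma D_plus f g x df dg : derivable_pt_lim f x df -> derivable_pt_lim g x dg ->
  derivable_pt_lim (fun s => f s + g s) x (df + dg).
Proof. intros; apply (derivable_pt_lim_plus f g); auto. Qed.
Lemma D_minus f g x df dg : derivable_pt_lim f x df -> derivable_pt_lim g x dg ->
  derivable_pt_lim (fun s => f s - g s) x (df - dg).
Proof. intros; apply (derivable_pt_lim_minus f g); auto. Qed.
Lemma D_const c x : derivable_pt_lim (fun _ => c) x 0.
Proof. apply derivable_pt_lim_const. Qed.
Lemma D_id x : derivable_pt_lim (fun s => s) x 1.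
Proof. apply derivable_pt_lim_id. Qed.
Lemma D_comp f g x df dg : derivable_pt_lim g x dg -> derivable_pt_lim f (g x) df ->
  derivable_pt_lim (fun s => f (g s)) x (df * dg).
Proof. intros H1 H2. apply (derivable_pt_lim_comp g f); auto. Qed.
Lemma D_Rpower y x : 0 < x -> derivable_pt_lim (fun s => Rpower s y) x (y * Rpower x (y - 1)).
Proof. intros; apply derivable_pt_lim_power; auto. Qed.
Lemma D_loc f g x l : 0 < x -> (forall s, 0 < s -> f s = g s) ->
  derivable_pt_lim g x l -> derivable_pt_lim f x l.
Proof.
  intros Hx Hfg H eps Heps. destruct (H eps Heps) as [d Hd].
  assert (Hm : 0 < Rmin d x) by (apply Rmin_pos; [apply (cond_pos d)|lra]).
  exists (mkposreal _ Hm). intros h Hh0 Hh. simpl in Hh.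
  assert (Rabs h < d) by (eapply Rlt_le_trans; [exact Hh|apply Rmin_l]).
  assert (Rabs h < x) by (eapply Rlt_le_trans; [exact Hh|apply Rmin_r]).
  rewrite !Hfg; [apply Hd; auto| lra |].
  apply Rabs_def2 in H1. lra.
Qed.

Lemma Rpower_m1 x y : 0 < x -> Rpower x (y - 1) = Rpower x y / x.
Proof.
  intros Hx. unfold Rminus. rewrite Rpower_plus, Rpower_Ropp, Rpower_1 by lra. reflexivity.
Qed.

Lemma Rpower_pos' x y : 0 < Rpower x y.
Proof. unfold Rpower; apply exp_pos. Qed.

Lemma cont_pos f x0 : continuity_pt f x0 -> 0 < f x0 ->
  exists d, 0 < d /\ forall x, Rabs (x - x0) < d -> 0 < f x.
Proof.
  intros Hc Hp. destruct (Hc (f x0) Hp) as [d [Hd H]].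
  exists d. split; auto. intros x Hx.
  destruct (Req_dec x x0) as [->|Hne]; auto.
  assert (Hr := H x (conj (conj I (not_eq_sym Hne)) Hx)).
  unfold R_dist in Hr. apply Rabs_def2 in Hr. lra.
Qed.

Lemma cont_neg f x0 : continuity_pt f x0 -> f x0 < 0 ->
  exists d, 0 < d /\ forall x, Rabs (x - x0) < d -> f x < 0.
Proof.
  intros Hc Hp. destruct (cont_pos (fun x => - f x) x0) as [d [Hd H]].
  - apply continuity_pt_opp; auto.
  - lra.
  - exists d; split; auto. intros x Hx; specialize (H x Hx); lra.
Qed.

Section Sign.
Variable nu0 : R.
Hypothesis Hnu : 0 < nu0.

Definition Jg x := Rpower (x/2) nu0 * f0 nu0 (x*x/4).
Definition Dq y := nu0 * f0 nu0 y + 2 * y * f1 nu0 y.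
Definition Jd x := Rpower (x/2) nu0 / x * Dq (x*x/4).

Lemma sq4_deriv x : derivable_pt_lim (fun s => s*s/4) x (x/2).
Proof.
  eapply D_eq. apply (D_mult (fun s => s * s) (fun _ => /4)).
  apply (D_mult (fun s => s) (fun s => s)); apply D_id. apply D_const. field.
Qed.

Lemma f0sq_deriv x : derivable_pt_lim (fun s => f0 nu0 (s*s/4)) x (f1 nu0 (x*x/4) * (x/2)).
Proof. apply (D_comp (f0 nu0) (fun s => s*s/4)). apply sq4_deriv. apply f0_deriv; auto. Qed.

Lemma Jg_deriv x : 0 < x -> derivable_pt_lim Jg x (Jd x).
Proof.
  intros Hx. unfold Jg.
  eapply D_eq. apply (D_mult (fun s => Rpower (s/2) nu0) (fun s => f0 nu0 (s*s/4))).
  - apply (D_comp (fun s => Rpower s nu0) (fun s => s/2)).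
    + eapply D_eq. apply (D_mult (fun s => s) (fun _ => /2)). apply D_id. apply D_const.
      reflexivity.
    + apply D_Rpower. lra.
  - apply f0sq_deriv.
  - unfold Jd, Dq. rewrite Rpower_m1 by lra. field. lra.
Qed.

Lemma BesselJ_deriv x : 0 < x -> derivable_pt_lim (BesselJ nu0) x (Jd x).
Proof.
  intros Hx. apply (D_loc _ Jg); auto.
  intros s Hs. unfold Jg. apply BesselJ_eq; auto.
  apply Jg_deriv; auto.
Qed.

Lemma Dq_deriv y : derivable_pt_lim Dq y (nu0 * f1 nu0 y + (2 * f1 nu0 y + 2 * y * f2 nu0 y)).
Proof.
  unfold Dq. eapply D_eq. apply D_plus.
  apply (D_mult (fun _ => nu0) (f0 nu0)). apply D_const. apply f0_deriv; auto.
  apply (D_mult (fun s => 2 * s) (f1 nu0)).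
  eapply D_eq. apply (D_mult (fun _ => 2) (fun s => s)). apply D_const. apply D_id. reflexivity.
  apply f1_deriv; auto. ring.
Qed.

Lemma h_cont x : continuity_pt (fun s => Dq (s*s/4)) x.
Proof.
  apply derivable_continuous_pt. eexists.
  apply (D_comp Dq (fun s => s*s/4)). apply sq4_deriv. apply Dq_deriv.
Qed.

Lemma k_cont x : continuity_pt (fun s => f0 nu0 (s*s/4)) x.
Proof.
  apply derivable_continuous_pt. eexists. apply f0sq_deriv.
Qed.

Lemma Jd_pos x : 0 < x -> 0 < Dq (x*x/4) -> 0 < Jd x.
Proof.
  intros Hx H. unfold Jd. apply Rmult_lt_0_compat; auto.
  apply Rdiv_lt_0_compat; auto. apply Rpower_pos'.
Qed.

Lemma f0_at0 : f0 nu0 0 = acoef nu0 0.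
Proof. unfold f0. apply PSeries_0. Qed.

Lemma sign_lemma (X : R) : 0 < X ->
  (forall x1 : R, 0 < x1 -> derivable_pt_lim (BesselJ nu0) x1 0 ->
     (forall y : R, 0 < y < x1 -> ~ derivable_pt_lim (BesselJ nu0) y 0) -> X < x1) ->
  forall x, 0 < x < X -> 0 < Dq (x*x/4) /\ 0 < f0 nu0 (x*x/4).
Proof.
  intros HX Hyp.
  set (h := fun s => Dq (s*s/4)).
  assert (Hh0 : 0 < h 0).
  { unfold h, Dq. replace (0*0/4) with 0 by field. rewrite f0_at0.
    pose proof (acoef0_pos nu0 Hnu). nra. }
  destruct (cont_pos h 0 (h_cont 0) Hh0) as [d0 [Hd0 Hd0']].
  assert (HD : forall x, 0 < x < X -> 0 < h x).
  { intros x0 Hx0. destruct (Rle_lt_dec (h x0) 0) as [Hle|]; auto. exfalso.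
    set (E := fun y => 0 <= y <= x0 /\ forall z, 0 < z <= y -> 0 < h z).
    assert (Hb : bound E) by (exists x0; intros y [Hy _]; lra).
    assert (HE0 : exists y, E y) by (exists 0; split; [lra| intros; lra]).
    destruct (completeness E Hb HE0) as [m [Hub Hlub]].
    assert (Hmin : E (Rmin (d0/2) x0)).
    { split. split. apply Rmin_glb; lra. apply Rmin_r.
      intros z Hz. apply Hd0'. assert (z <= d0/2) by (eapply Rle_trans; [apply Hz|apply Rmin_l]).
      rewrite Rminus_0_r, Rabs_pos_eq; lra. }
    assert (Hm0 : 0 < m).
    { apply Rlt_le_trans with (Rmin (d0/2) x0). apply Rmin_glb_lt; lra. apply Hub; auto. }
    assert (Hmx : m <= x0) by (apply Hlub; intros y [Hy _]; lra).
    assert (Hin : forall z, 0 < z < m -> 0 < h z).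
    { intros z Hz. destruct (Classical_Prop.classic (exists y, E y /\ z < y)) as [[y [[_ Hy] Hzy]]|Hn].
      - apply Hy; lra.
      - exfalso. assert (m <= z). apply Hlub. intros y Hy.
        destruct (Rle_lt_dec y z); auto. exfalso; apply Hn; eauto. lra. }
    destruct (Rtotal_order (h m) 0) as [Hneg|[Hzero|Hpos]].
    - destruct (cont_neg h m (h_cont m) Hneg) as [d1 [Hd1 Hd1']].
      set (z := Rmax (m - d1/2) (m/2)).
      assert (m/2 <= z) by apply Rmax_r. assert (m - d1/2 <= z) by apply Rmax_l.
      assert (z < m) by (unfold z; apply Rmax_lub_lt; lra).
      assert (0 < h z) by (apply Hin; lra).
      assert (h z < 0). apply Hd1'. rewrite Rabs_left; lra. lra.
    -
      assert (Hder : derivable_pt_lim (BesselJ nu0) m 0).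
      { eapply D_eq. apply BesselJ_deriv; auto. unfold Jd. fold (h m). rewrite Hzero. ring. }
      assert (Hno : forall y, 0 < y < m -> ~ derivable_pt_lim (BesselJ nu0) y 0).
      { intros y Hy Hd. pose proof (uniqueness_limite _ _ _ _ Hd (BesselJ_deriv y ltac:(lra))).
        pose proof (Jd_pos y ltac:(lra) (Hin y Hy)). lra. }
      pose proof (Hyp m Hm0 Hder Hno). lra.
    - destruct (cont_pos h m (h_cont m) Hpos) as [d1 [Hd1 Hd1']].
      destruct (Req_dec m x0) as [Heq|Hne]. { subst m. lra. }
      assert (HEy : E (Rmin (m + d1/2) x0)).
      { split. split. apply Rmin_glb; lra. apply Rmin_r.
        intros z Hz. assert (z <= m + d1/2) by (eapply Rle_trans; [apply Hz|apply Rmin_l]).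
        destruct (Rlt_le_dec z m). apply Hin; lra. apply Hd1'. rewrite Rabs_pos_eq; lra. }
      pose proof (Hub _ HEy).
      assert (m < Rmin (m + d1/2) x0) by (apply Rmin_glb_lt; lra). lra. }
  intros x Hx. split. apply HD; auto.
  set (k := fun s => f0 nu0 (s*s/4)).
  assert (Hk0 : 0 < k 0).
  { unfold k. replace (0*0/4) with 0 by field. rewrite f0_at0. apply acoef0_pos; auto. }
  destruct (cont_pos k 0 (k_cont 0) Hk0) as [d2 [Hd2 Hd2']].
  set (e := Rmin (d2/2) (x/2)).
  assert (He1 : e <= d2/2) by apply Rmin_l. assert (He2 : e <= x/2) by apply Rmin_r.
  assert (He0 : 0 < e) by (apply Rmin_glb_lt; lra).
  assert (Hke : 0 < k e) by (apply Hd2'; rewrite Rminus_0_r, Rabs_pos_eq; lra).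
  assert (HJe : 0 < Jg e) by (unfold Jg; apply Rmult_lt_0_compat; [apply Rpower_pos'|exact Hke]).
  destruct (MVT_cor2 Jg Jd e x ltac:(lra)) as [c [Hc1 Hc2]].
  { intros c Hc. apply Jg_deriv. lra. }
  assert (0 < Jd c) by (apply Jd_pos; [lra| apply HD; lra]).
  assert (0 < Jg x) by nra.
  unfold Jg in H0. pose proof (Rpower_pos' (x/2) nu0).
  destruct (Rlt_le_dec 0 (f0 nu0 (x*x/4))); auto. nra.
Qed.

End Sign.

Lemma lin_id (N nu c r P F0 F1 F2 : R) : r <> 0 ->
  c*(r*r)*F2 + (nu+1)*F1 + F0 = 0 ->
  (N - 3/2 + nu)*(nu - N + 3/2) = (3*N-5)/9 ->
  let b := N - 3/2 + nu in
  let ph := P*F0 in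
  let ph1 := b*(P/r)*F0 + P*(F1*(2*c*r)) in
  let ph2 := b*((b-1)*(P/r/r))*F0 + b*(P/r)*(F1*(2*c*r)) + (b*(P/r)*(F1*(2*c*r)) + P*(F2*(2*c*r)*(2*c*r) + F1*(2*c))) in
  ph2 + (4 - 2*N)/r*ph1 - (3*N-5)/(9*(r*r))*ph = -4*c*ph.
Proof.
  intros Hr Hode Hb b ph ph1 ph2.
  assert (E : ph2 + (4 - 2*N)/r*ph1 - (3*N-5)/(9*(r*r))*ph - (-4*c*ph) =
     P*F0/(r*r) * ((N - 3/2 + nu)*(nu - N + 3/2) - (3*N-5)/9) + 4*c*P*(c*(r*r)*F2 + (nu+1)*F1 + F0)).
  { unfold ph2, ph1, ph, b. field. auto. }
  rewrite Hode, Hb in E. lra.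
Qed.

Lemma final_alg (N al w r M P F0 F1 F2 nu c lam : R) :
  2 <= N -> 0 < al -> al^3 = 9*N-15 -> 0 < w -> w^3 = r -> 0 < M -> 0 < P -> 0 < F0 ->
  0 < nu * F0 + 2*(c*r*r)*F1 ->
  (c*r*r)*F2 + (nu+1)*F1 + F0 = 0 ->
  (N - 3/2 + nu)*(nu - N + 3/2) = (3*N-5)/9 ->
  c = lam^2/4 ->
  let b := N - 3/2 + nu in
  lam^2*(M*(P*F0)) <=
   (-al*(1/3*((1/3-1)*(w/r/r))) - M*(b*((b-1)*(P/r/r))*F0 + b*(P/r)*(F1*(2*c*r)) + (b*(P/r)*(F1*(2*c*r)) + P*(F2*(2*c*r)*(2*c*r) + F1*(2*c)))))
   + (N-1)/r * (-al*(1/3*(w/r)) - M*(b*(P/r)*F0 + P*(F1*(2*c*r))))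
   + (-al*w - M*(P*F0)) * (-al*(1/3*(w/r)) - M*(b*(P/r)*F0 + P*(F1*(2*c*r))))^3.
Proof.
  intros HN Hal Hal3 Hw Hw3 HM HP HF0 HD Hode Hb Hc b.
  assert (Hr : 0 < r) by (rewrite <- Hw3; apply pow_lt; auto).
  set (a := -al*w). set (p := -al*(1/3*(w/r))). set (bb := -M*(P*F0)).
  set (q := -M*(b*(P/r)*F0 + P*(F1*(2*c*r)))).
  set (p' := -al*(1/3*((1/3-1)*(w/r/r)))).
  set (q' := -M*(b*((b-1)*(P/r/r))*F0 + b*(P/r)*(F1*(2*c*r)) + (b*(P/r)*(F1*(2*c*r)) + P*(F2*(2*c*r)*(2*c*r) + F1*(2*c))))).
  assert (Hp3 : p^3 = -(9*N-15)/(27*(r*r))).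
  { replace (p^3) with (- (al^3) * (w^3) / (27 * (r*r*r))) by (unfold p; field; lra).
    rewrite Hal3, Hw3. field. lra. }
  assert (Hap2 : 3*a*p^2 = -(9*N-15)/(3*r)).
  { replace (3*a*p^2) with (- (al^3) * (w^3) / (3 * (r*r))) by (unfold a, p; field; lra).
    rewrite Hal3, Hw3. field. lra. }
  assert (H1 : p' + (N-1)/r*p + a*p^3 = 0).
  { replace (a*p^3) with (al * al^3 * (w * w^3) / (27*(r*r*r))) by (unfold a, p; field; lra).
    rewrite Hal3, Hw3. unfold p', p. field. lra. }
  assert (H2 : q' + (N-1)/r*q + bb*p^3 + 3*a*p^2*q = lam^2*(M*(P*F0))).
  { rewrite Hp3, Hap2.
    assert (L := lin_id N nu c r P F0 F1 F2 ltac:(lra)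
       ltac:(replace (c*(r*r)) with (c*r*r) by ring; exact Hode) Hb).
    simpl in L. fold b in L.
    replace (lam^2) with (4*c) by (rewrite Hc; field).
    unfold q', q, bb.
    replace (-(9*N-15)/(27*(r*r))) with (-(3*N-5)/(9*(r*r))) by (field; lra).
    replace (-(9*N-15)/(3*r)) with (-(3*N-5)/r) by (field; lra).
    transitivity (-M * ((b*((b-1)*(P/r/r))*F0 + b*(P/r)*(F1*(2*c*r)) + (b*(P/r)*(F1*(2*c*r)) + P*(F2*(2*c*r)*(2*c*r) + F1*(2*c))))
       + (4 - 2*N)/r*(b*(P/r)*F0 + P*(F1*(2*c*r))) - (3*N-5)/(9*(r*r))*(P*F0))).
    - field. lra.
    - rewrite L. ring. }
  assert (Hpn : p < 0).
  { unfold p. assert (0 < w/r) by (apply Rdiv_lt_0_compat; auto).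
    assert (0 < al*(w/r)) by (apply Rmult_lt_0_compat; auto). lra. }
  assert (Han : a < 0) by (unfold a; assert (0 < al*w) by (apply Rmult_lt_0_compat; auto); lra).
  assert (Hbn : bb < 0) by (unfold bb; assert (0 < M*(P*F0)) by (repeat apply Rmult_lt_0_compat; auto); lra).
  assert (Hqn : q < 0).
  { unfold q. replace (b*(P/r)*F0 + P*(F1*(2*c*r))) with (P/r*((N-3/2)*F0 + (nu*F0 + 2*(c*r*r)*F1)))
      by (unfold b; field; lra).
    assert (0 < P/r) by (apply Rdiv_lt_0_compat; auto).
    assert (0 < (N-3/2)*F0) by (apply Rmult_lt_0_compat; lra).
    assert (0 < M*(P / r * ((N - 3 / 2) * F0 + (nu * F0 + 2 * (c * r * r) * F1)))) by
      (apply Rmult_lt_0_compat; [lra|]; apply Rmult_lt_0_compat; lra). lra. }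
  enough (HH : lam^2*(M*(P*F0)) <= p' + q' + (N-1)/r*(p+q) + (a+bb)*(p+q)^3).
  { eapply Rle_trans; [exact HH|]. right. unfold p', q', p, q, a, bb. ring. }
  assert (E : p' + q' + (N-1)/r*(p+q) + (a+bb)*(p+q)^3 - lam^2*(M*(P*F0)) =
     a*(3*p*q^2 + q^3) + bb*(3*p^2*q + 3*p*q^2 + q^3)).
  { rewrite <- H2. replace (p' + q' + (N - 1) / r * (p + q) + (a + bb) * (p + q) ^ 3 -
      (q' + (N - 1) / r * q + bb * p ^ 3 + 3 * a * p ^ 2 * q)) with
      ((p' + (N-1)/r*p + a*p^3) + (a*(3*p*q^2 + q^3) + bb*(3*p^2*q + 3*p*q^2 + q^3))) by ring.
    rewrite H1. ring. }
  assert (0 <= a*(3*p*q^2 + q^3)).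
  { assert (0 < q^2) by nra. assert (q^3 < 0) by (replace (q^3) with (q*q^2) by ring; nra).
    assert (p*q^2 < 0) by nra. nra. }
  assert (0 <= bb*(3*p^2*q + 3*p*q^2 + q^3)).
  { assert (0 < q^2) by nra. assert (0 < p^2) by nra.
    assert (q^3 < 0) by (replace (q^3) with (q*q^2) by ring; nra).
    assert (p*q^2 < 0) by nra. assert (p^2*q < 0) by nra. nra. }
  lra.
Qed.

Lemma csq_deriv c s : derivable_pt_lim (fun s => c*s*s) s (2*c*s).
Proof.
  eapply D_eq. apply (D_mult (fun s => c*s) (fun s => s)).
  apply (D_mult (fun _ => c) (fun s => s)). apply D_const. apply D_id. apply D_id. ring.
Qed.

Lemma lin_deriv k x : derivable_pt_lim (fun s => k*s) x k.
Proof. eapply D_eq. apply (D_mult (fun _ => k) (fun s => s)). apply D_const. apply D_id. ring. Qed.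

Lemma deriv_U al M b c nu0 s : 0 < nu0 -> 0 < s ->
  derivable_pt_lim (fun s => -al*Rpower s (1/3) - M*(Rpower s b * f0 nu0 (c*s*s))) s
   (-al*(1/3*Rpower s (1/3-1)) - M*(b*Rpower s (b-1)*f0 nu0 (c*s*s) + Rpower s b*(f1 nu0 (c*s*s)*(2*c*s)))).
Proof.
  intros Hnu Hs. eapply D_eq. apply D_minus.
  - apply (D_mult (fun _ => -al) (fun s => Rpower s (1/3))). apply D_const. apply D_Rpower; auto.
  - apply (D_mult (fun _ => M)). apply D_const.
    apply (D_mult (fun s => Rpower s b) (fun s => f0 nu0 (c*s*s))). apply D_Rpower; auto.
    apply (D_comp (f0 nu0) (fun s => c*s*s)). apply csq_deriv. apply f0_deriv; auto.
  - ring.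
Qed.

Lemma deriv_ur al M b c nu0 r : 0 < nu0 -> 0 < r ->
  derivable_pt_lim (fun s => -al*(1/3*Rpower s (1/3-1)) - M*(b*Rpower s (b-1)*f0 nu0 (c*s*s) + Rpower s b*(f1 nu0 (c*s*s)*(2*c*s)))) r
   (-al*(1/3*((1/3-1)*Rpower r (1/3-1-1))) - M*(b*((b-1)*Rpower r (b-1-1))*f0 nu0 (c*r*r) + b*Rpower r (b-1)*(f1 nu0 (c*r*r)*(2*c*r)) + (b*Rpower r (b-1)*(f1 nu0 (c*r*r)*(2*c*r)) + Rpower r b*(f2 nu0 (c*r*r)*(2*c*r)*(2*c*r) + f1 nu0 (c*r*r)*(2*c))))).
Proof.
  intros Hnu Hr. eapply D_eq. apply D_minus.
  - apply (D_mult (fun _ => -al)). apply D_const.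
    apply (D_mult (fun _ => 1/3)). apply D_const. apply D_Rpower; auto.
  - apply (D_mult (fun _ => M)). apply D_const. apply D_plus.
    + apply (D_mult (fun s => b*Rpower s (b-1)) (fun s => f0 nu0 (c*s*s))).
      apply (D_mult (fun _ => b)). apply D_const. apply D_Rpower; auto.
      apply (D_comp (f0 nu0) (fun s => c*s*s)). apply csq_deriv. apply f0_deriv; auto.
    + apply (D_mult (fun s => Rpower s b) (fun s => f1 nu0 (c*s*s)*(2*c*s))). apply D_Rpower; auto.
      apply (D_mult (fun s => f1 nu0 (c*s*s)) (fun s => 2*c*s)).
      apply (D_comp (f1 nu0) (fun s => c*s*s)). apply csq_deriv. apply f1_deriv; auto.
      apply (lin_deriv (2*c)).
  - ring.
Qed.

Lemma nu_facts n : (2 <= n)%nat ->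
  0 < nu n /\ nu n * nu n = (36 * INR n ^ 2 - 96 * INR n + 61) / 36.
Proof.
  intros Hn. assert (HN : 2 <= INR n) by (apply le_INR in Hn; simpl in Hn; lra).
  assert (Hrad : 0 < 36 * INR n ^ 2 - 96 * INR n + 61) by nra.
  unfold nu. split.
  - apply Rmult_lt_0_compat. lra. apply sqrt_lt_R0; auto.
  - replace (/ 6 * sqrt (36 * INR n ^ 2 - 96 * INR n + 61) * (/ 6 * sqrt (36 * INR n ^ 2 - 96 * INR n + 61)))
      with (/36 * (sqrt (36 * INR n ^ 2 - 96 * INR n + 61) * sqrt (36 * INR n ^ 2 - 96 * INR n + 61))) by field.
    rewrite sqrt_sqrt by lra. field.
Qed.

Lemma cube_root x : 0 < x -> (Rpower x (1/3))^3 = x.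
Proof.
  intros Hx. rewrite <- Rpower_pow by apply Rpower_pos'. rewrite Rpower_mult.
  replace (1/3 * INR 3) with 1 by (simpl; field). apply Rpower_1; auto.
Qed.

Lemma U_eq n C lam t s : (2 <= n)%nat -> 0 < lam -> 0 < s ->
  ufun n C lam s t = - alpha n * Rpower s (1/3)
    - (C*exp(-lam^2*t)*Rpower (lam/2) (nu n)) * (Rpower s (INR n - 3/2 + nu n) * f0 (nu n) (lam^2/4*s*s)).
Proof.
  intros Hn Hl Hs. destruct (nu_facts n Hn) as [Hnu _].
  unfold ufun, ustar, vfun. rewrite BesselJ_eq by (auto; nra).
  replace (lam*s/2) with (lam/2*s) by field.
  rewrite <- Rpower_mult_distr by lra. rewrite Rpower_plus.
  replace (lam * s * (lam * s) / 4) with (lam^2/4*s*s) by field. ring.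
Qed.

Lemma Ut_deriv n C lam r t : 0 < r -> (2 <= n)%nat -> 0 < lam ->
  derivable_pt_lim (fun t' => ufun n C lam r t') t
    (lam^2 * ((C*exp(-lam^2*t)*Rpower (lam/2) (nu n)) * (Rpower r (INR n - 3/2 + nu n) * f0 (nu n) (lam^2/4*r*r)))).
Proof.
  intros Hr Hn Hl.
  pose proof (U_eq n C lam t r Hn Hl Hr) as HU.
  unfold ufun, vfun in *. eapply D_eq. apply D_minus. apply D_const.
  apply (D_mult (fun t' => C * exp (- lam ^ 2 * t') * Rpower r (INR n - 3 / 2))).
  apply (D_mult (fun t' => C * exp (- lam ^ 2 * t'))).
  apply (D_mult (fun _ => C)). apply D_const.
  apply (D_comp exp (fun t' => - lam^2 * t')).
  apply (lin_deriv (-lam^2)).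
  apply derivable_pt_lim_exp. apply D_const. apply D_const.
  unfold ustar in HU.
  assert (HV : C * exp (- lam ^ 2 * t) * Rpower r (INR n - 3 / 2) * BesselJ (nu n) (lam * r) =
     C * exp (- lam ^ 2 * t) * Rpower (lam / 2) (nu n) * (Rpower r (INR n - 3 / 2 + nu n) * f0 (nu n) (lam ^ 2 / 4 * r * r))) by lra.
  rewrite <- HV. ring.
Qed.

Theorem mainTheorem9 (n : nat) (C lam Rad : R) :
  (2 <= n)%nat -> 0 < C -> 0 < lam ->
  0 < Rad ->
  (forall x1 : R, 0 < x1 ->
     derivable_pt_lim (BesselJ (nu n)) x1 0 ->
     (forall y : R, 0 < y < x1 -> ~ derivable_pt_lim (BesselJ (nu n)) y 0) ->
     Rad < x1 / lam) ->
  Rad < sqrt (3 / 8 * (3 * INR n - 5) * (2 * INR n - 3) ^ 3) ->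
  forall r t : R, 0 < r < Rad -> 0 < t ->
    exists (ur : R -> R) (urr ut : R),
      (forall s : R, 0 < s -> derivable_pt_lim (fun s' => ufun n C lam s' t) s (ur s)) /\
      derivable_pt_lim ur r urr /\
      derivable_pt_lim (fun t' => ufun n C lam r t') t ut /\
      ut <= urr + (INR n - 1) / r * ur r + ufun n C lam r t * (ur r) ^ 3.
Proof.
  intros Hn HC Hl HRad Hx1 _ r t [Hr HrR] Ht.
  destruct (nu_facts n Hn) as [Hnu Hnu2].
  assert (HN : 2 <= INR n) by (apply le_INR in Hn; simpl in Hn; lra).
  set (al := alpha n). set (M := C*exp(-lam^2*t)*Rpower (lam/2) (nu n)).
  set (b := INR n - 3/2 + nu n). set (c := lam^2/4).
  exists (fun s => -al*(1/3*Rpower s (1/3-1)) - M*(b*Rpower s (b-1)*f0 (nu n) (c*s*s) + Rpower s b*(f1 (nu n) (c*s*s)*(2*c*s)))).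
  eexists. eexists. split; [|split; [|split]].
  - intros s Hs. apply (D_loc _ (fun s => -al*Rpower s (1/3) - M*(Rpower s b * f0 (nu n) (c*s*s)))); auto.
    intros s' Hs'. apply U_eq; auto. apply deriv_U; auto.
  - apply deriv_ur; auto.
  - apply Ut_deriv; auto.
  - rewrite U_eq by auto. fold al M b c.
    rewrite !Rpower_m1 by lra.
    assert (HS := sign_lemma (nu n) Hnu (lam*Rad) ltac:(nra)).
    destruct (HS ltac:(intros x1 Hx1p Hd Hno; specialize (Hx1 x1 Hx1p Hd Hno);
                       apply Rmult_lt_reg_r with (/lam); [apply Rinv_0_lt_compat; lra|];
                       replace (lam*Rad*/lam) with Rad by (field; lra); exact Hx1)
                 (lam*r) ltac:(split; nra)) as [HD HF].
    replace (lam*r*(lam*r)/4) with (c*r*r) in HD, HF by (unfold c; field).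
    unfold Dq in HD.
    apply final_alg; auto.
    + unfold al, alpha. apply Rpower_pos'.
    + unfold al, alpha. apply cube_root. lra.
    + apply Rpower_pos'.
    + apply cube_root; auto.
    + unfold M. apply Rmult_lt_0_compat. apply Rmult_lt_0_compat; auto. apply exp_pos. apply Rpower_pos'.
    + apply Rpower_pos'.
    + apply f_ode; auto.
    + nra.
Qed.
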